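(* Let $G$ be a simple undirected graph on $n$ vertices, and let $\delta$ be the minimum vertex degree over all graphs in the LC orbit of $G$. Then $$Q(G,4)\le \frac{\gamma(\delta+1)+6^n}{2^n},\qquad\text{where}\qquad \gamma(d)=\sum_{t=0}^{n}\binom{n}{t}2^{t}\left(\sum_{k=\max(1,\,d+t-n)}^{t}\binom{t}{k}2^{\,n-k}\right).$$
   Context: All graphs are finite, simple and undirected. For a vertex $u$, $G\setminus u$ denotes $G$ with $u$ and all its incident edges removed. For a vertex $v$ with neighbourhood $N_v$ (the set of vertices adjacent to $v$), local complementation (LC) on $v$ transforms $G$ into $G*v$ by replacing the induced subgraph of $G$ on $N_v$ by its complement. For an edge $\{u,v\}$, edge local complementation is $G^{(uv)}=G*u*v*u$. The LC orbit of $G$ is the set of all graphs (up to isomorphism) obtainable from $G$ by any finite sequence of LC operations. The interlace polynomial $Q(G)=Q(G,x)$ is defined recursively: for the edgeless graph $E_n$ on $n$ vertices, $Q(E_n)=x^n$; for any other graph $G$, choose any edge $\{u,v\}$ and set $Q(G)=Q(G\setminus u)+Q(G^{(uv)}\setminus u)+Q((G*u)\setminus u)$ (this is independent of the choice of edge). *)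

(* Defs.v *)
From HB Require Import structures.
From mathcomp Require Import all_boot all_order all_algebra.
Set Implicit Arguments. Unset Strict Implicit. Unset Printing Implicit Defensive.
Import Order.TTheory GRing.Theory Num.Theory.

Definition simple_graph n (e : rel 'I_n) : bool :=
  [forall x, ~~ e x x] && [forall x, forall y, e x y == e y x].

Definition nbhd n (e : rel 'I_n) (v : 'I_n) : {set 'I_n} := [set x | e v x].
Definition deg n (e : rel 'I_n) (v : 'I_n) : nat := #|nbhd e v|.

Definition lc n (e : rel 'I_n) (v : 'I_n) : rel 'I_n :=
  fun x y => e x y (+) [&& x != y, x \in nbhd e v & y \in nbhd e v].

Definition elc n (e : rel 'I_n) (u v : 'I_n) : rel 'I_n :=
  lc (lc (lc e u) v) u.

(* LC orbit: graphs obtainable by a finite sequence of LC operations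
   (on the same labelled vertex set; isomorphism does not affect degrees). *)
Definition LC_orbit n (e h : rel 'I_n) : Prop :=
  exists s : seq 'I_n, h = foldl (@lc n) e s.

(* Interlace polynomial of the induced subgraph of e on the vertex set S.
   Removing a vertex u is modelled as S :\ u; since for v in S the induced
   subgraph of (e * v) on S equals (induced subgraph on S) * v, LC can be
   computed on the ambient relation.  An edge {u,v} inside S is chosen by
   [pick]; the recursion is independent of this choice.  The fuel k = #|S|
   suffices, since each recursive call removes one vertex. *)
Fixpoint Qaux n (k : nat) (e : rel 'I_n) (S : {set 'I_n}) : {poly int} :=
  match k with
  | 0 => 'X^#|S|
  | k'.+1 =>
    match [pick uv : 'I_n * 'I_n | [&& uv.1 \in S, uv.2 \in S & e uv.1 uv.2]] with
    | None => 'X^#|S|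
    | Some uv =>
        let u := uv.1 in let v := uv.2 in
        (Qaux k' e (S :\ u) + Qaux k' (elc e u v) (S :\ u)
         + Qaux k' (lc e u) (S :\ u))%R
    end
  end.

Definition interlace n (e : rel 'I_n) : {poly int} := Qaux n e [set: 'I_n].

Definition gamma (n d : nat) : nat :=
  \sum_(t < n.+1) 'C(n, t) * 2 ^ t *
     \sum_(maxn 1 (d + t - n) <= k < t.+1) 'C(t, k) * 2 ^ (n - k).

(* Main.v *)
Require Import Defs.
From HB Require Import structures.
From mathcomp Require Import all_boot all_order all_algebra.
From Stdlib Require Import ArithRing.
Set Implicit Arguments. Unset Strict Implicit. Unset Printing Implicit Defensive.

Section Par.
Variable n : nat.
Implicit Types (e : rel 'I_n) (X Y S : {set 'I_n}).

Definition par e v X : bool := \big[addb/false]_(y in X) e v y.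
Definition symirr e := (forall x, e x x = false) /\ (forall x y, e x y = e y x).
Definition tog e w X := if par e w X then (if w \in X then X :\ w else w |: X) else X.

Lemma par_setU1 e v w X : w \notin X -> par e v (w |: X) = e v w (+) par e v X.
Proof. by move=> h; rewrite /par big_setU1. Qed.

Lemma par_setD1 e v w X : w \in X -> par e v X = e v w (+) par e v (X :\ w).
Proof. by move=> h; rewrite /par (big_setD1 _ h). Qed.

Lemma par_tog e v w X : par e v (tog e w X) = par e v X (+) (e v w && par e w X).
Proof.
rewrite /tog; case: (par e w X); last by rewrite andbF addbF.
rewrite andbT; case: ifP => h.
  by rewrite (par_setD1 e v h); case: (e v w); case: (par e v (X :\ w)).
by rewrite par_setU1 ?h // addbC.
Qed.

Lemma par_tog_w e w X : e w w = false -> par e w (tog e w X) = par e w X.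
Proof. by move=> h; rewrite par_tog h /= addbF. Qed.

Lemma in_tog e w X v : (v \in tog e w X) = if v == w then (v \in X) (+) par e w X else v \in X.
Proof.
rewrite /tog; case: (par e w X); last by case: eqP; rewrite ?addbF.
case: (boolP (w \in X)) => h; case: eqP => [->|/eqP ne].
- by rewrite !inE eqxx h.
- by rewrite !inE ne.
- by rewrite !inE eqxx (negbTE h).
- by rewrite !inE (negbTE ne).
Qed.

Lemma togK e w X : e w w = false -> tog e w (tog e w X) = X.
Proof.
move=> h; rewrite {1}/tog par_tog_w //; rewrite /tog; case: (par e w X) => //.
case: (boolP (w \in X)) => hw.
  by rewrite setD11 setD1K.
by rewrite setU11 setU1K.
Qed.

Lemma tog_sub e w X S : w \in S -> (tog e w X \subset S) = (X \subset S).
Proof.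
move=> wS; rewrite /tog; case: (par e w X) => //; case: ifP => h.
  apply/idP/idP => H.
    by rewrite -(setD1K h) subUset sub1set wS H.
  exact: subset_trans (subD1set _ _) H.
by rewrite subUset sub1set wS.
Qed.

Lemma par_lc e w v Y :
  par (lc e w) v Y = par e v Y (+) (e w v && (par e w Y (+) (v \in Y))).
Proof.
rewrite /par /lc big_split /=; congr addb.
rewrite /nbhd.
case: (boolP (e w v)) => hwv /=.
  case: (boolP (v \in Y)) => hv.
    rewrite (big_setD1 v hv) [X in _ = X (+) _](big_setD1 v hv) eqxx /= addbT.
    rewrite inE hwv /= negbK; apply: eq_bigr => y; rewrite !inE => /andP [ny _].
    by rewrite eq_sym ny.
  rewrite addbF; apply: eq_bigr => y hy; rewrite !inE hwv /=.
  by case: eqP hy hv => // -> ->.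
by rewrite big1 // => y _; rewrite !inE (negbTE hwv) andbF.
Qed.

End Par.

Section W.
Variable n : nat.
Implicit Types (e : rel 'I_n) (X Y S : {set 'I_n}) (f : 'I_n -> bool -> bool -> nat).

Definition W e S f : nat :=
  \sum_(X : {set 'I_n} | X \subset S) \prod_(v in S) f v (v \in X) (par e v X).

Lemma sum_split (F : {set 'I_n} -> nat) S u : u \in S ->
  \sum_(X : {set 'I_n} | X \subset S) F X = \sum_(Y : {set 'I_n} | Y \subset S :\ u) (F Y + F (u |: Y)).
Proof.
move=> uS; rewrite big_split /= (bigID (fun X => u \in X)) /= addnC.
congr (_ + _).
  by apply: eq_bigl => X; rewrite subsetD1.
rewrite (reindex_onto (fun Y => u |: Y) (fun X => X :\ u)); last first.
  by move=> X /andP [_ h]; rewrite setD1K.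
apply: eq_bigl => Y; rewrite subsetD1 setU11 andbT subUset sub1set uS /=.
case: (boolP (u \in Y)) => hu /=.
  rewrite andbF; apply/negbTE; apply/nandP; right.
  by apply/eqP => h; move: hu; rewrite -h setD11.
by rewrite setU1K // eqxx andbT.
Qed.

Lemma W_ext e S f g : (forall v x z, f v x z = g v x z) -> W e S f = W e S g.
Proof. by move=> h; apply: eq_bigr => X _; apply: eq_bigr => v _; rewrite h. Qed.

Lemma W_del e S f u : u \in S ->
  W e (S :\ u) f = W e S (fun v x z => if v == u then (~~ x : nat) else f v x z).
Proof.
move=> uS; rewrite /W (sum_split _ uS); apply: eq_bigr => Y hY.
rewrite (big_setD1 u uS) [X in _ = _ + X](big_setD1 u uS) !eqxx setU11 /= mul0n addn0.
have uY : u \notin Y by move: hY; rewrite subsetD1 => /andP [].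
rewrite (negbTE uY) mul1n; apply: eq_bigr => v; rewrite !inE => /andP [/negbTE -> _].
by [].
Qed.

Lemma W_lc e S f w : symirr e -> w \in S ->
  W (lc e w) S f = W e S (fun v x z => if v == w then f v (x (+) z) z
                                      else if e w v then f v x (z (+) x) else f v x z).
Proof.
move=> [irr sym] wS.
have tK : cancel (tog e w) (tog e w) := fun X => togK X (irr w).
rewrite /W (reindex_inj (can_inj tK)).
apply: eq_big => [X | X _]; first by rewrite tog_sub.
apply: eq_bigr => v _.
rewrite in_tog par_lc !par_tog in_tog.
case: (eqVneq v w) => [->|ne].
  by rewrite irr /= !addbF.
rewrite (sym v w) (irr w) /=; case: (e w v) => /=; last by rewrite !addbF.
by case: (par e v X); case: (par e w X); case: (v \in X).
Qed.

Definition upd (f : 'I_n -> bool -> bool -> nat) u (h : bool -> bool -> nat) :=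
  fun v => if v == u then h else f v.

Lemma W_lin e S f u a b : u \in S ->
  W e S (upd f u a) + W e S (upd f u b) = W e S (upd f u (fun x z => a x z + b x z)).
Proof.
move=> uS; rewrite /W -big_split /=; apply: eq_bigr => X _.
rewrite (big_setD1 u uS) (big_setD1 u uS) (big_setD1 u uS) /upd !eqxx.
have E h : \prod_(i in S :\ u) (if i == u then h else f i) (i \in X) (par e i X)
   = \prod_(i in S :\ u) f i (i \in X) (par e i X).
  by apply: eq_bigr => i; rewrite !inE => /andP [/negbTE -> _].
by rewrite !E /= -mulnDl.
Qed.

End W.
Import GRing.Theory.

Definition f0 (x z : bool) : nat := if x || z then 1 else 3.

Lemma f0_1 x z : f0 (x (+) z) z = f0 x z. Proof. by case: x; case: z. Qed.
Lemma f0_2 x z : f0 x (z (+) x) = f0 x z. Proof. by case: x; case: z. Qed.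

Section Rec.
Variable n : nat.
Implicit Types (e : rel 'I_n) (X Y S : {set 'I_n}).
Definition F0 : 'I_n -> bool -> bool -> nat := fun _ => f0.

Lemma symirr_lc e w : symirr e -> symirr (lc e w).
Proof.
move=> [irr sym]; split=> [x|x y]; first by rewrite /lc irr eqxx.
rewrite /lc (sym x y) (eq_sym x y); congr addb.
by case: (x \in _); case: (y \in _); rewrite ?andbF.
Qed.

Lemma W_lc_upd e S w u h : symirr e -> w \in S ->
  W (lc e w) S (upd F0 u h) =
  W e S (upd F0 u (if u == w then (fun x z => h (x (+) z) z)
                   else if e w u then (fun x z => h x (z (+) x)) else h)).
Proof.
move=> se wS; rewrite W_lc //; apply: W_ext => v x z; rewrite /upd /F0.
case: (eqVneq v u) => [->|nvu].
  by case: (u == w); case: (e w u).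
by case: (v == w); case: (e w v); rewrite ?f0_1 ?f0_2.
Qed.

Lemma W_del_upd e S u : u \in S ->
  W e (S :\ u) F0 = W e S (upd F0 u (fun x _ => ~~ x : nat)).
Proof.
by move=> uS; rewrite W_del //; apply: W_ext => v x z; rewrite /upd; case: (v == u).
Qed.

Lemma W_rec e S u v : symirr e -> u \in S -> v \in S -> e u v ->
  W e S F0 = W e (S :\ u) F0 + W (elc e u v) (S :\ u) F0 + W (lc e u) (S :\ u) F0.
Proof.
move=> se uS vS euv.
have se1 := symirr_lc u se.
have se2 := symirr_lc v se1.
have uv : u != v by apply/eqP => h; move: euv; rewrite h (proj1 se).
rewrite /elc !W_del_upd // W_lc_upd // eqxx W_lc_upd // (negbTE uv).
have -> : lc e u v u by rewrite /lc /nbhd !inE (proj1 se) !andbF addbF (proj2 se).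
rewrite W_lc_upd // eqxx W_lc_upd // eqxx.
rewrite W_lin // W_lin //; apply: W_ext => w x z; rewrite /upd /F0.
by case: (w == u) => //; case: x; case: z.
Qed.

Lemma W_set0 e f : W e set0 f = 1.
Proof.
rewrite /W (big_pred1 set0) ?big_set0 // => X; by rewrite /= subset0.
Qed.

Lemma W_noedge e S : (forall x y, x \in S -> y \in S -> e x y = false) ->
  W e S F0 = 4 ^ #|S|.
Proof.
move: {2}#|S| (erefl #|S|) => k; elim: k S => [|k IH] S hS hno.
  have -> : S = set0 by apply/eqP; rewrite -cards_eq0 hS.
  by rewrite W_set0 cards0.
have [u uS] : exists u, u \in S.
  by apply/set0Pn; rewrite -cards_eq0 hS.
have hS' : #|S :\ u| = k by move: hS; rewrite (cardsD1 u) uS => -[].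
rewrite hS expnS -hS' -(IH (S :\ u)) //; last by move=> x y; rewrite !inE => /andP [_ ?] /andP [_ ?]; apply: hno.
rewrite /W (sum_split _ uS) big_distrr /=; apply: eq_bigr => Y hY.
have uY : u \notin Y by move: hY; rewrite subsetD1 => /andP [].
have YS : Y \subset S by move: hY; rewrite subsetD1 => /andP [].
have pu : forall Z : {set 'I_n}, Z \subset S -> par e u Z = false.
  move=> Z ZS; rewrite /par big1 // => y yZ; apply: hno => //; exact: (subsetP ZS).
rewrite (big_setD1 u uS) [X in _ + X](big_setD1 u uS) setU11 (negbTE uY) pu //.
rewrite pu; last by rewrite subUset sub1set uS.
rewrite /F0 /f0 /=.
have -> : \prod_(i in S :\ u) (if (i \in u |: Y) || par e i (u |: Y) then 1 else 3)
   = \prod_(i in S :\ u) (if (i \in Y) || par e i Y then 1 else 3).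
  apply: eq_bigr => v; rewrite !inE => /andP [nvu vS].
  by rewrite (negbTE nvu) par_setU1 // hno.
by rewrite -mulnDl.
Qed.

Lemma Qaux_eval k e S : symirr e -> (#|S| <= k)%N ->
  ((Qaux k e S).[4%:R] = ((W e S F0)%:R : int))%R.
Proof.
elim: k e S => [|k IH] e S se hk /=.
  rewrite hornerXn W_noedge ?natrX // => x y xS.
  by move: hk; rewrite leqn0 cards_eq0 => /eqP h; move: xS; rewrite h inE.
case: pickP => [[u v] /= /and3P [uS vS euv] | hno].
  have se1 := symirr_lc u se.
  have hk' : #|S :\ u| <= k by move: hk; rewrite (cardsD1 u) uS.
  rewrite !hornerD !IH //; last by rewrite /elc; do 3 apply: symirr_lc.
  by rewrite -!natrD -W_rec.
rewrite hornerXn W_noedge ?natrX // => x y xS yS.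
by have := hno (x, y); rewrite /= xS yS /= => ->.
Qed.

End Rec.

Section Dist.
Variable n : nat.
Implicit Types (e G H : rel 'I_n) (X Y S : {set 'I_n}).

Definition wt e X := #|[set v | (v \in X) || par e v X]|.

Lemma wt_lc e w X : symirr e -> wt (lc e w) (tog e w X) = wt e X.
Proof.
move=> [irr sym]; apply: eq_card => v; rewrite !inE in_tog par_lc !par_tog in_tog.
case: (eqVneq v w) => [->|ne].
  by rewrite irr /= !addbF; case: (w \in X); case: (par e w X).
rewrite (sym v w); case: (e w v) => /=; last by rewrite !addbF.
rewrite irr /=; move: (sym v w); case: (e v w); case: (e w v) => //= _; by case: (par e v X); case: (par e w X); case: (v \in X).
Qed.

Lemma orbit_lc G H w : LC_orbit G H -> LC_orbit G (lc H w).
Proof. by case=> s ->; exists (rcons s w); rewrite foldl_rcons. Qed.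

Lemma orbit_symirr G H : symirr G -> LC_orbit G H -> symirr H.
Proof.
move=> sG [s ->]; elim: s G sG => //= w s IH G sG; apply: IH; exact: symirr_lc.
Qed.

Lemma simple_symirr G : simple_graph G -> symirr G.
Proof.
move=> /andP [/forallP h1 /forallP h2]; split=> [x|x y]; first by apply/negbTE.
by have /forallP/(_ y)/eqP := h2 x.
Qed.

Lemma dist G delta : symirr G -> (forall H, LC_orbit G H -> forall v, delta <= deg H v) ->
  forall k H X, LC_orbit G H -> X != set0 -> #|X| <= k -> delta.+1 <= wt H X.
Proof.
move=> sG hmin; elim=> [|k IH] H X oH X0 hk.
  by move: hk; rewrite leqn0 cards_eq0 (negbTE X0).
have caseA : forall H', LC_orbit G H' -> forall w, w \in X -> par H' w X ->
    delta.+1 <= wt H' X.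
  move=> H' oH' w wX pw; have sH' := orbit_symirr sG oH'.
  rewrite -(wt_lc w X sH').
  have -> : tog H' w X = X :\ w by rewrite /tog pw wX.
  apply: IH; first exact: orbit_lc.
    have : [exists y in X, H' w y].
      case: (boolP [exists y in X, H' w y]) => // hn; move: pw; rewrite /par big1 // => y yX.
      by apply/negbTE/negP => h; apply: (negP hn); apply/exists_inP; exists y.
    case/exists_inP => y yX hy; apply/set0Pn; exists y; rewrite !inE yX andbT.
    by apply/eqP => h; move: hy; rewrite h (proj1 sH').
  by move: hk; rewrite (cardsD1 w X) wX.
have sH := orbit_symirr sG oH.
case: (boolP [exists w in X, par H w X]) => [/exists_inP [w wX pw]|hno].
  exact: caseA oH w wX pw.
have [v vX] := set0Pn _ X0.
case: (boolP [exists y, H v y && ~~ par H y X]) => [/existsP [y /andP [hvy py]] | hall].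
  rewrite -(wt_lc y X sH).
  have -> : tog H y X = X by rewrite /tog (negbTE py).
  apply: (caseA _ (orbit_lc y oH) v vX).
  rewrite par_lc (proj2 sH y v) hvy (negbTE py) vX /=.
  have -> : par H v X = false by apply/negbTE/negP => h; apply: (negP hno); apply/exists_inP; exists v.
  by [].
apply: (@leq_trans (deg H v).+1); first by rewrite ltnS hmin.
have -> : (deg H v).+1 = #|v |: nbhd H v|.
  by rewrite cardsU1 /nbhd inE (proj1 sH).
apply: subset_leq_card; apply/subsetP => x; rewrite !inE => /orP [/eqP ->|hx].
  by rewrite vX.
apply/orP; right; apply/negPn/negP => h; apply: (negP hall); apply/existsP; exists x.
by rewrite hx h.
Qed.

End Dist.

Lemma bin_id n k j : k + j <= n ->
  'C(n, k + j) * 'C(k + j, k) = 'C(n, k) * 'C(n - k, j).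
Proof.
move=> h.
have hk : k <= n by apply: leq_trans (leq_addr _ _) h.
have hj : j <= n - k by rewrite leq_subRL // addnC.
have h1 := bin_fact h.
have h2 := bin_fact (leq_addr j k); rewrite addKn in h2.
have h3 := bin_fact hk.
have h4 := bin_fact hj; rewrite -subnDA in h4.
have P0 : 0 < k`! * j`! * (n - (k + j))`! by rewrite !muln_gt0 !fact_gt0.
have E1 : 'C(n, k + j) * 'C(k + j, k) * (k`! * j`! * (n - (k + j))`!) = n`!.
  rewrite -h1 -h2.
  by rewrite -!multE; ring.
have E2 : 'C(n, k) * 'C(n - k, j) * (k`! * j`! * (n - (k + j))`!) = n`!.
  rewrite -h3 -h4.
  by rewrite -!multE; ring.
by apply/eqP; rewrite -(eqn_pmul2r P0) E1 E2.
Qed.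

Definition Gk n d k := if k == 0 then 0 else 3 ^ minn (n - k) (n - d).

Definition Tt n d t k := if (maxn 1 (d + t - n) <= k) && (k < t.+1)
  then 'C(n, t) * 2 ^ t * ('C(t, k) * 2 ^ (n - k)) else 0.

Lemma gamma_T n d : d <= n ->
  gamma n d = \sum_(t < n.+1) \sum_(k < n.+1) Tt n d t k.
Proof.
move=> dn; apply: eq_bigr => -[t tn] _ /=.
rewrite (big_nat_widen _ _ n.+1) // big_geq_mkord big_distrr big_mkcond /=.
by apply: eq_bigr => k _; rewrite /Tt andbC.
Qed.

Lemma T_lower n d k : d <= n -> 2 ^ n * ('C(n, k) * Gk n d k) <= \sum_(t < n.+1) Tt n d t k.
Proof.
move=> dn; rewrite /Gk; case: (eqVneq k 0) => [->|k0]; first by rewrite /= !muln0.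
set m := minn (n - k) (n - d).
have mk : m <= n - k by rewrite geq_minl.
have md : m <= n - d by rewrite geq_minr.
case: (leqP k n) => kn; last by rewrite bin_small // mul0n muln0.
have -> : 3 ^ m = \sum_(j < m.+1) 'C(m, j) * 2 ^ j.
  rewrite -[3]/(1 + 2) expnDn; apply: eq_bigr => j _; by rewrite exp1n mul1n.
rewrite !big_distrr /=.
apply: (@leq_trans (\sum_(j < m.+1) Tt n d (j + k) k)).
  apply: leq_sum => j _.
  have jm : j <= m := ltnSE (ltn_ord j).
  have kjn : k + j <= n by rewrite -leq_subRL //; apply: leq_trans jm mk.
  rewrite /Tt.
  have -> : (maxn 1 (d + (j + k) - n) <= k) && (k < (j + k).+1).
    rewrite ltnS leq_addl andbT geq_max lt0n k0 /= leq_subLR addnA (addnC n).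
    rewrite (addnC k n) leq_add2r.
    by rewrite -leq_subRL //; apply: leq_trans jm md.
  rewrite (addnC j k).
  have -> : 'C(n, k + j) * 2 ^ (k + j) * ('C(k + j, k) * 2 ^ (n - k))
      = 2 ^ n * ('C(n, k) * ('C(n - k, j) * 2 ^ j)).
    have e2 : 2 ^ (k + j) * 2 ^ (n - k) = 2 ^ n * 2 ^ j.
      by rewrite -!expnD addnAC subnKC.
    transitivity ('C(n, k + j) * 'C(k + j, k) * (2 ^ (k + j) * 2 ^ (n - k))).
      by rewrite -!multE; ring.
    rewrite bin_id // e2.
    by rewrite -!multE; ring.
  apply: leq_mul => //; apply: leq_mul => //; apply: leq_mul => //; exact: leq_bin2l.
rewrite -(big_mkord xpredT (fun t => Tt n d t k)) (@big_cat_nat _ _ _ k) //=; last by apply: leq_trans kn _.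
apply: leq_trans (leq_addl _ _).
have := big_addn 0 n.+1 k xpredT (fun i => Tt n d i k); rewrite add0n => ->.
have hm : m.+1 <= n.+1 - k by rewrite subSn // ltnS.
rewrite (@big_cat_nat _ _ _ m.+1) //=.
by rewrite big_mkord leq_addr.
Qed.


Lemma sum_card n (G : nat -> nat) :
  \sum_(X : {set 'I_n}) G #|X| = \sum_(k < n.+1) 'C(n, k) * G k.
Proof.
rewrite (partition_big (fun X : {set 'I_n} => (inord #|X| : 'I_n.+1)) xpredT) //=.
apply: eq_bigr => k _.
have hX : forall X : {set 'I_n}, #|X| < n.+1.
  by move=> X; rewrite ltnS; apply: leq_trans (max_card _) _; rewrite card_ord.
rewrite (eq_bigr (fun _ => G k)); last first.
  by move=> X /eqP <-; rewrite inordK.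
rewrite (eq_bigl (fun X : {set 'I_n} => X \in [set X : {set 'I_n} | #|X| == k])); last first.
  move=> X; rewrite inE -(inj_eq val_inj) /= inordK //.
by rewrite sum_nat_const card_draws card_ord.
Qed.

Section Fin.
Variable n : nat.
Definition z (e : rel 'I_n) (X : {set 'I_n}) := #|[set v | ~~ (v \in X) && ~~ par e v X]|.

Lemma W_full e : W e setT (@F0 n) = \sum_(X : {set 'I_n}) 3 ^ z e X.
Proof.
rewrite /W; apply: eq_big => [X|X _]; first by rewrite subsetT.
rewrite -prod_nat_const [RHS]big_mkcond [LHS]big_mkcond /=; apply: eq_bigr => v _.
by rewrite /F0 /f0 !inE; case: (v \in X); case: (par e v X).
Qed.

Lemma wt_z e X : wt e X + z e X = n.
Proof.
rewrite /wt /z; transitivity (#|[set v | (v \in X) || par e v X]| + #|~: [set v | (v \in X) || par e v X]|).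
  by congr (_ + _); apply: eq_card => v; rewrite !inE negb_or.
by rewrite cardsC card_ord.
Qed.

Lemma z_wt e X : z e X = n - wt e X.
Proof.
have h := wt_z e X.
have hw : wt e X <= n by move: (leq_addr (z e X) (wt e X)); rewrite h.
by apply/eqP; rewrite -(eqn_add2l (wt e X)) subnKC // h.
Qed.

Lemma z_le e X : z e X <= n - #|X|.
Proof.
have h : #|X| + #|~: X| = n by rewrite cardsC card_ord.
have hw : #|X| <= n by move: (leq_addr #|~: X| #|X|); rewrite h.
have -> : n - #|X| = #|~: X| by apply/eqP; rewrite -(eqn_add2l #|X|) subnKC // h.
by apply: subset_leq_card; apply/subsetP => v; rewrite !inE => /andP [].
Qed.

Lemma z_set0 e : z e set0 = n.
Proof.
rewrite /z -[RHS](card_ord n) -cardsT; apply: eq_card => v.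
by rewrite !inE /par big_set0.
Qed.

End Fin.
Import Order.TTheory GRing.Theory Num.Theory.

Lemma main_nat n (G : rel 'I_n) delta : symirr G ->
  (forall H, LC_orbit G H -> forall v, delta <= deg H v) -> delta.+1 <= n ->
  W G setT (@F0 n) * 2 ^ n <= gamma n delta.+1 + 6 ^ n.
Proof.
move=> sG hmin dn.
rewrite W_full (bigD1 set0) //= z_set0 mulnDl.
have -> : 3 ^ n * 2 ^ n = 6 ^ n by rewrite -expnMn.
rewrite addnC leq_add2r.
apply: (@leq_trans ((\sum_(X : {set 'I_n}) Gk n delta.+1 #|X|) * 2 ^ n)).
  rewrite leq_mul2r; apply/orP; right.
  rewrite [X in _ <= X](bigD1 set0) //= cards0 {1}/Gk /= add0n.
  apply: leq_sum => X X0; rewrite /Gk.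
  have -> : (#|X| == 0) = false by apply/negbTE; rewrite cards_eq0.
  apply: leq_pexp2l => //; rewrite leq_min z_le /= z_wt.
  apply: leq_sub2l.
  apply: (dist sG hmin (k := #|X|)) => //; by exists [::].
rewrite sum_card mulnC big_distrr /= gamma_T //.
rewrite exchange_big /=; apply: leq_sum => k _; exact: T_lower.
Qed.

Local Open Scope ring_scope.

Theorem theorem1 (n : nat) (G : rel 'I_n) (HG : simple_graph G) (delta : nat)
  (Hdelta_attained : exists2 H, LC_orbit G H & exists v, deg H v = delta)
  (Hdelta_min : forall H, LC_orbit G H -> forall v, (delta <= deg H v)%N) :
  ((interlace G).[4])%:~R
    <= ((gamma n delta.+1)%:R + (6 ^ n)%:R) / (2 ^ n)%:R :> rat.
Proof.
have sG := simple_symirr HG.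
have [H oH [v _]] := Hdelta_attained.
have dn : (delta.+1 <= n)%N.
  apply: leq_trans (dist sG Hdelta_min (k := 1) (X := [set v]) oH _ _) _.
  - by apply/set0Pn; exists v; rewrite inE.
  - by rewrite cards1.
  - by rewrite /wt; apply: leq_trans (max_card _) _; rewrite card_ord.
rewrite /interlace Qaux_eval //; last by rewrite cardsT card_ord.
rewrite rmorph_nat ler_pdivlMr ?ltr0n ?expn_gt0 // -natrD -natrM ler_nat.
exact: main_nat.
Qed.
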